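(* Let $p>1$ and $\lambda_0\in\mathbb{C}$. The map $Q_{\lambda_0}:L^p(F)[t]\to W^{k,p}(E)[t]$ is a right inverse of $P_{\lambda_0}:W^{k,p}(E)[t]\to L^p(F)[t]$, i.e. $P_{\lambda_0}Q_{\lambda_0}=\mathrm{Id}$ on $L^p(F)[t]$.
   Context: $X$ is a compact manifold, $E,F\to X$ Hermitian vector bundles with connections, and $P(D_t)=\sum_{l=0}^kA_{k-l}(x,\partial_x)D_t^l$ a translation-invariant elliptic operator of order $k$ on $\mathbb{R}\times X$ ($D_t=-i\partial_t$), with $P(\lambda)=\sum_lA_{k-l}\lambda^l$ and resolvent $R(\lambda)=P(\lambda)^{-1}:L^p(F)\to W^{k,p}(E)$, meromorphic in $\lambda$. Near $\lambda_0$ write $R(\lambda)=\sum_{m\ge-d(\lambda_0)}R_m(\lambda_0)(\lambda-\lambda_0)^m$, where $d(\lambda_0)$ is the pole order ($0$ if $\lambda_0$ is not a root). $W^{k,p}(E)[t]$ and $L^p(F)[t]$ denote sections over $\mathbb{R}\times X$ polynomial in $t$ with coefficients in these spaces. $P_{\lambda_0}(D_t)=e^{-i\lambda_0t}P(D_t)e^{i\lambda_0t}=\sum_{n\ge0}\frac1{n!}\frac{\partial^nP}{\partial\lambda^n}(\lambda_0)D_t^n$. $D_t^{-1}$ is the endomorphism of $L^p(F)[t]$ sending $\frac{(it)^j}{j!}v$ to $\frac{(it)^{j+1}}{(j+1)!}v$, and $D_t^{m}$ for $m<0$ means $(D_t^{-1})^{-m}$. Define $Q_{\lambda_0}=\sum_{m\ge-d(\lambda_0)}R_m(\lambda_0)D_t^m$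 (a finite sum on each polynomial). *)

(* Defs.v *)
From HB Require Import structures.
From mathcomp Require Import all_boot all_order all_algebra.
From mathcomp Require Import complex.
From mathcomp Require Import all_classical all_reals all_analysis.
Import numFieldNormedType.Exports.
Import Order.TTheory GRing.Theory Num.Theory.

Set Implicit Arguments.
Unset Strict Implicit.
Unset Printing Implicit Defensive.

Local Open Scope ring_scope.

(* The complex numbers are modelled as R[i] for a realType R.
   V plays the role of W^{k,p}(E), W the role of L^p(F) (abstract complex
   Banach spaces).

   Polynomial sections:  an element  sum_j (i t)^j / j! * c_j  of V[t]
   (resp. W[t]) is represented by its (finitely supported) coefficient
   function  c : nat -> V  with respect to the basis (i t)^j / j!.
   In this basis  D_t = -i d/dt  maps (it)^j/j! v to (it)^(j-1)/(j-1)! v,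
   and D_t^{-1} (as defined in the paper) maps (it)^j/j! v to
   (it)^(j+1)/(j+1)! v. *)

Definition Dt (U : zmodType) (c : nat -> U) : nat -> U := fun j => c j.+1.

Definition Dtinv (U : zmodType) (c : nat -> U) : nat -> U :=
  fun j => if j is j'.+1 then c j' else 0.

Definition Dtpow (U : zmodType) (m : int) (c : nat -> U) : nat -> U :=
  match m with
  | Posz n => iter n (@Dt U) c
  | Negz n => iter n.+1 (@Dtinv U) c
  end.

Definition Pop (R : realType) (V W : lmodType R[i]) (k : nat)
  (A : nat -> V -> W) (lam : R[i]) (v : V) : W :=
  \sum_(l < k.+1) (lam ^+ l) *: A (k - l)%N v.

(* (1/n!) d^n P / d lambda^n (lambda0)
     = sum_{l=0}^k binom(l,n) lambda0^(l-n) A_{k-l}. *)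
Definition Ptaylor (R : realType) (V W : lmodType R[i]) (k : nat)
  (A : nat -> V -> W) (lam0 : R[i]) (n : nat) (v : V) : W :=
  \sum_(l < k.+1) (('C(l, n))%:R * lam0 ^+ (l - n)) *: A (k - l)%N v.

(* P_{lambda0}(D_t) = sum_{n >= 0} (1/n!) P^{(n)}(lambda0) D_t^n acting on
   V[t] (the terms with n > k vanish since P has degree <= k). *)
Definition Plam0 (R : realType) (V W : lmodType R[i]) (k : nat)
  (A : nat -> V -> W) (lam0 : R[i]) (c : nat -> V) : nat -> W :=
  fun j => \sum_(n < k.+1) Ptaylor k A lam0 n (iter n (@Dt V) c j).

(* Q_{lambda0} = sum_{m >= -d} R_m D_t^m acting on W[t], where Rl m = R_m.
   On a polynomial whose coefficients vanish in degrees >= N, D_t^m kills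
   it for m >= N, so the sum over -d <= m < N (i.e. n = m + d < d + N) is
   the full (finite) sum. *)
Definition Qlam0 (R : realType) (V W : lmodType R[i]) (d : nat)
  (Rl : int -> W -> V) (N : nat) (c : nat -> W) : nat -> V :=
  fun j => \sum_(n < d + N) Rl (n%:Z - d%:Z) (Dtpow (n%:Z - d%:Z) c j).

(* Main.v *)
Require Import Defs.
From HB Require Import structures.
From mathcomp Require Import all_boot all_order all_algebra.
From mathcomp Require Import complex.
From mathcomp Require Import all_classical all_reals all_analysis.
From mathcomp Require Import zify ring.
Import numFieldNormedType.Exports.
Import Order.TTheory GRing.Theory Num.Theory.
Local Open Scope ring_scope.
Local Open Scope classical_set_scope.

Lemma iterDt (U : zmodType) (c : nat -> U) n j : iter n (@Dt U) c j = c (j + n)%N.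
Proof.
elim: n j => [|n IH] j /=; first by rewrite addn0.
by rewrite /Dt IH addSnnS.
Qed.

Lemma iterDtinv (U : zmodType) (c : nat -> U) m i :
  iter m (@Dtinv U) c i = if (m <= i)%N then c (i - m)%N else 0.
Proof.
elim: m i => [|m IH] i /=; first by rewrite subn0.
rewrite /Dtinv; case: i => [|i] //; try by rewrite IH ltnS subSS.

Qed.

Lemma Dtpow_nat (U : zmodType) (c : nat -> U) (n d i : nat) :
  Dtpow (n%:Z - d%:Z) c i = if (d <= i + n)%N then c (i + n - d)%N else 0.
Proof.
case: (leqP d n) => hdn.
  rewrite subzn // /Dtpow iterDt.
  have -> : (d <= i + n)%N by lia.
  congr c; lia.
have -> : n%:Z - d%:Z = Negz (d - n).-1.
  by rewrite NegzE prednK ?subn_gt0 // -opprB subzn // ltnW.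
rewrite /Dtpow prednK ?subn_gt0 // iterDtinv.
have -> : ((d - n) <= i)%N = (d <= i + n)%N by lia.
case: ifP => // h; congr c; lia.
Qed.
Section Lin.
Variables (R : realType) (V W : lmodType R[i]) (k : nat) (A : nat -> {linear V -> W}) (lam0 : R[i]).

Lemma PtD n x y : Ptaylor k (fun j => A j) lam0 n (x + y) =
  Ptaylor k (fun j => A j) lam0 n x + Ptaylor k (fun j => A j) lam0 n y.
Proof. by rewrite /Ptaylor -big_split; apply: eq_bigr => l _; rewrite linearD scalerDr. Qed.

Lemma PtZ n a x : Ptaylor k (fun j => A j) lam0 n (a *: x) =
  a *: Ptaylor k (fun j => A j) lam0 n x.
Proof.
rewrite /Ptaylor scaler_sumr; apply: eq_bigr => l _.
by rewrite linearZ /= !scalerA mulrC.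
Qed.

Lemma Pt0 n : Ptaylor k (fun j => A j) lam0 n 0 = 0.
Proof. by rewrite -(scale0r (0 : V)) PtZ scale0r. Qed.

Lemma Pt_sum n (I : Type) (r : seq I) (P : pred I) (F : I -> V) :
  Ptaylor k (fun j => A j) lam0 n (\sum_(i <- r | P i) F i) =
  \sum_(i <- r | P i) Ptaylor k (fun j => A j) lam0 n (F i).
Proof. exact: (big_morph _ (PtD n) (Pt0 n)). Qed.

Lemma Pop0 lam : Pop k (fun j => A j) lam 0 = 0.
Proof. by rewrite /Pop big1 // => l _; rewrite linear0 scaler0. Qed.

End Lin.

Lemma reindex_ge (U : zmodType) (M a : nat) (F : nat -> U) :
  \sum_(s < M | (a <= s)%N) F s = \sum_(n < M - a) F (a + n)%N.
Proof.
elim: M => [|M IH]; first by rewrite !big_ord0.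
rewrite big_mkcond big_ord_recr /= -big_mkcond IH.
case: (leqP a M) => h.
  by rewrite subSn // big_ord_recr /= subnKC.
have -> : (M.+1 - a = 0)%N by lia.
have -> : (M - a = 0)%N by lia.
by rewrite big_ord0 addr0.
Qed.
Lemma combin (R : realType) (V W : lmodType R[i]) (k : nat) (A : nat -> {linear V -> W})
  (lam0 : R[i]) (d : nat) (Rl : int -> W -> V) (N : nat) (c : nat -> W)
  (hc : forall j, (N <= j)%N -> c j = 0)
  (Hzero : forall n : nat, Rl (n%:Z - d%:Z) 0 = 0)
  (Hkey : forall (w : W) (s : nat),
     \sum_(n' < k.+1 | (n' <= s)%N)
        Ptaylor k (fun j => A j) lam0 n' (Rl ((s - n')%N%:Z - d%:Z) w)
     = if s == d then w else 0) :
  Plam0 k (fun j => A j) lam0 (Qlam0 d Rl N c) = c.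
Proof.
apply: funext => j; rewrite /Plam0.
pose cz x := if (d <= x)%N then c (x - d)%N else 0.
pose g (n' n : nat) := Ptaylor k (fun j => A j) lam0 n' (Rl (n%:Z - d%:Z) (cz (j + n' + n)%N)).
have Hg : forall n' n, (d + N <= n)%N -> g n' n = 0.
  move=> n' n hn; rewrite /g /cz.
  have -> : (d <= j + n' + n)%N by lia.
  by rewrite hc ?Hzero ?Pt0 //; lia.
set K := k.+1; set L := (d + N)%N.
transitivity (\sum_(n' < K) \sum_(n < L) g n' n).
  apply: eq_bigr => n' _; rewrite iterDt /Qlam0 Pt_sum; apply: eq_bigr => n _.
  by rewrite Dtpow_nat /g /cz.
transitivity (\sum_(n' < K) \sum_(s < K + L | (n' <= s)%N) g n' (s - n')%N).
  apply: eq_bigr => n' _; rewrite (reindex_ge _ _ _ (fun s => g n' (s - n')%N)).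
  rewrite (big_ord_widen _ _ (_ : (L <= K + L - n')%N)); last by have := ltn_ord n'; lia.
  rewrite big_mkcond; apply: eq_bigr => n _; rewrite addKn.
  by case: ifP => // /negbT; rewrite -leqNgt => /Hg ->.
under eq_bigr do rewrite big_mkcond.
rewrite exchange_big /=.
transitivity (\sum_(s < K + L) if s == d :> nat then cz (j + s)%N else 0).
  apply: eq_bigr => s _; rewrite -big_mkcond /= -Hkey.
  apply: eq_bigr => n' hn'; rewrite /g; congr (Ptaylor _ _ _ _ (Rl _ _)).
  by congr cz; lia.
have hd : (d < K + L)%N by rewrite /K /L; lia.
rewrite -big_mkcond /= (bigD1 (Ordinal hd)) //= big1 ?addr0.
  by rewrite /cz leq_addl addnK.
by move=> i /andP [h1 h2]; exfalso; move: h2; rewrite -val_eqE /= h1.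
Qed.
Lemma geom_le (K : numFieldType) (q : K) M : 0 <= q -> q + q <= 1 ->
  \sum_(s < M) q ^+ s <= 2 - 2 * q ^+ M.
Proof.
move=> q0 q2; elim: M => [|M IH]; first by rewrite big_ord0 expr0 mulr1 subrr.
rewrite big_ord_recl expr0.
have -> : \sum_(i < M) q ^+ (lift ord0 i) = q * \sum_(i < M) q ^+ i.
  by rewrite mulr_sumr; apply: eq_bigr => i _; rewrite lift0 exprS.
apply: (le_trans (_ : _ <= 1 + q * (2 - 2 * q ^+ M))).
  by rewrite lerD2l ler_wpM2l.
have -> : 1 + q * (2 - 2 * q ^+ M) = (1 + (q + q)) - 2 * q ^+ M.+1.
  by rewrite exprS; ring.
by rewrite lerD2r -[2]/(1 + 1) lerD2l.
Qed.

Lemma coef0 (R : realType) (U : normedModType R[i]) (r : R[i]) (a : nat -> U) :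
  0 < r ->
  (forall z : R[i], 0 < `|z| < r ->
     (\sum_(s < M) z ^+ s *: a s) @[M --> \oo] --> (0 : U)) ->
  a 0%N = 0.
Proof.
move=> r0 H.
have EF : Filter (\oo : set_system nat) := eventually_filter.
set z1 := r / 2.
have z1pos : 0 < z1 by rewrite divr_gt0.
have z1r : z1 < r by rewrite ltr_pdivrMr // ltr_pMr // ltr1n.
have nz1 : `|z1| = z1 by rewrite gtr0_norm.
have Hz1 := H z1 (ltac:(by rewrite nz1 z1pos z1r)).
pose u s := z1 ^+ s *: a s.
have hu : u s @[s --> \oo] --> (0 : U).
  have Hs := Hz1; rewrite -cvg_shiftS in Hs.
  have := cvgB Hs Hz1; rewrite subr0.
  have -> : ((fun n => \sum_(s < n.+1) z1 ^+ s *: a s) - (fun M => \sum_(s < M) z1 ^+ s *: a s)) = u.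
    apply: funext => n.
    change (\sum_(s < n.+1) z1 ^+ s *: a s - \sum_(s < n) z1 ^+ s *: a s = u n).
    by rewrite big_ord_recr /= addrAC subrr add0r.
  by apply.
have [N0 _ HN0] := cvgr_dist_lt _ _ hu _ (@ltr01 _).
pose B := 1 + \sum_(s < N0) `|u s|.
have hB : forall s, `|u s| <= B.
  move=> s; case: (ltnP s N0) => hs.
    apply: (le_trans (_ : _ <= \sum_(i < N0) `|u i|)); last by rewrite lerDr.
    by rewrite (bigD1 (Ordinal hs)) //= lerDl sumr_ge0.
  have := HN0 s hs; rewrite /= sub0r normrN => /ltW h.
  by apply: (le_trans h); rewrite lerDl sumr_ge0.
have B0 : 0 <= B by apply: le_trans (hB 0%N).
set C := B * 2 + 1.
have claim : forall q, 0 < q -> q + q <= 1 -> `|a 0%N| < q * C.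
  move=> q q0 q2.
  have q1 : q <= 1 by apply: le_trans q2; rewrite lerDl ltW.
  set z := q * z1.
  have hz : 0 < `|z| < r.
    rewrite normrM nz1 gtr0_norm // mulr_gt0 //=.
    by apply: le_lt_trans z1r; rewrite ler_piMl // ltW.
  have [N1 _ HN1] := cvgr_dist_lt _ _ (H z hz) _ q0.
  have := HN1 N1.+1 (leqnSn _); rewrite /= sub0r normrN.
  rewrite big_ord_recl expr0 scale1r.
  set X := \sum_(i < N1) _ => hX.
  have hXb : `|X| <= q * B * 2.
    apply: (le_trans (ler_norm_sum _ _ _)).
    apply: (le_trans (_ : _ <= \sum_(i < N1) q ^+ i.+1 * B)).
      apply: ler_sum => i _.
      rewrite lift0 /z exprMn -scalerA normrZ ger0_norm ?(exprn_ge0 _ (ltW q0)) //.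
      by rewrite ler_wpM2l ?(exprn_ge0 _ (ltW q0)) // hB.
    apply: (le_trans (_ : _ <= q * B * (2 - 2 * q ^+ N1))).
      rewrite (_ : \sum_(i < N1) q ^+ i.+1 * B = q * B * \sum_(i < N1) q ^+ i).
        by rewrite ler_wpM2l ?mulr_ge0 ?(ltW q0) //; apply: geom_le => //; apply: ltW.
      by rewrite mulr_sumr; apply: eq_bigr => i _; rewrite exprS; ring.
    by rewrite ler_wpM2l ?mulr_ge0 ?(ltW q0) // gerBl mulr_ge0 // exprn_ge0 // ltW.
  have -> : a 0%N = (a 0%N + X) - X by rewrite addrK.
  apply: (le_lt_trans (ler_normB _ _)).
  apply: (lt_le_trans (ltr_leD hX hXb)).
  by rewrite /C le_eqVlt; apply/orP; left; apply/eqP; ring.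
apply/eqP; apply/negPn/negP => ha.
set x := `|a 0%N|.
have x0 : 0 < x by rewrite normr_gt0.
have C0 : 0 < C by rewrite /C ltr_wpDl // mulr_ge0.
set t := C + x.
have t0 : 0 < t by rewrite addr_gt0.
have tt0 : 0 < t + t by rewrite addr_gt0.
set q := x / (t + t).
have q0 : 0 < q by rewrite divr_gt0.
have q2 : q + q <= 1.
  have -> : q + q = x / t.
    rewrite /q; field; rewrite ?lt0r_neq0 //.
  by rewrite ler_pdivrMr // mul1r lerDr ltW.
have := claim q q0 q2.
have : q * C <= x.
  rewrite /q mulrAC ler_pdivrMr // ler_wpM2l ?(ltW x0) //.
  by apply: (le_trans (_ : C <= t)); [rewrite lerDl (ltW x0) | rewrite lerDr (ltW t0)].
by move=> h1 h2; have := lt_le_trans h2 h1; rewrite ltxx.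
Qed.
Lemma coef_all (R : realType) (U : normedModType R[i]) (r : R[i]) (a : nat -> U) :
  0 < r ->
  (forall z : R[i], 0 < `|z| < r ->
     (\sum_(s < M) z ^+ s *: a s) @[M --> \oo] --> (0 : U)) ->
  forall s, a s = 0.
Proof.
move=> r0 H.
suff: forall t s, (s < t)%N -> a s = 0 by move=> h s; apply: (h s.+1).
elim=> [//|t IH] s hs.
case: (ltnP s t) => [/IH //|hts]; have -> : s = t by lia.
pose a' s := a (s + t)%N.
have := @coef0 R U r a' r0; rewrite /a' add0n; apply.
move=> z hz.
have hz0 : z != 0 by rewrite -normr_gt0; case/andP: hz.
have HS := H z hz; rewrite -(cvg_shiftn t) in HS.
have := cvgZl_tmp (k := z ^- t) HS; rewrite scaler0 => /(_ eventually_filter).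
suff -> : (fun M => \sum_(s < M) z ^+ s *: a (s + t)%N) =
          (z ^- t \*: [sequence \sum_(s0 < n + t) z ^+ s0 *: a s0]_n) by [].
apply: funext => n.
change (\sum_(s < n) z ^+ s *: a (s + t)%N = z ^- t *: \sum_(s0 < n + t) z ^+ s0 *: a s0).
rewrite [(n + t)%N]addnC big_split_ord /= [X in _ = _ *: (X + _)]big1 ?add0r; last first.
  by move=> i _; rewrite IH ?scaler0.
rewrite scaler_sumr; apply: eq_bigr => i _ /=.
by rewrite scalerA exprD mulrA mulVf ?expf_neq0 // mul1r addnC.
Qed.
Lemma big_eq_pick (U : zmodType) (M d : nat) (F : nat -> U) : (d < M)%N ->
  \sum_(s < M) (if (s : nat) == d then F s else 0) = F d.
Proof.
move=> hd; rewrite -big_mkcond /= (bigD1 (Ordinal hd)) //= big1 ?addr0 //.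
by move=> i /andP [h1 h2]; exfalso; move: h2; rewrite -val_eqE /= h1.
Qed.

Lemma cvg_bigsum (R : realType) (U : normedModType R[i]) K (f : nat -> nat -> U) (l : nat -> U) :
  (forall i, (i < K)%N -> f i M @[M --> \oo] --> l i) ->
  (\sum_(i < K) f i M) @[M --> \oo] --> \sum_(i < K) l i.
Proof.
elim: K => [|K IH] H.
  rewrite big_ord0.
  have -> : (fun M : nat => \sum_(i < 0) f i M) = (fun=> 0) by apply: funext => M; rewrite big_ord0.
  exact: cvg_cst.
rewrite big_ord_recr /=.
have -> : (fun M : nat => \sum_(i < K.+1) f i M) =
   ((fun M => \sum_(i < K) f i M) + (fun M => f K M)).
  by apply: funext => M; rewrite big_ord_recr.
apply: cvgD; first by apply: IH => i hi; apply: H; apply: ltnW.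
exact: H.
Qed.

Lemma Pop_taylor (R : realType) (V W : lmodType R[i]) (k : nat) (A : nat -> {linear V -> W})
  (lam0 z : R[i]) (x : V) :
  Pop k (fun j => A j) (lam0 + z) x =
  \sum_(n' < k.+1) z ^+ n' *: Ptaylor k (fun j => A j) lam0 n' x.
Proof.
rewrite /Pop /Ptaylor.
under [RHS]eq_bigr do rewrite scaler_sumr.
rewrite exchange_big /=; apply: eq_bigr => l _.
under [RHS]eq_bigr do rewrite scalerA.
rewrite -scaler_suml; congr (_ *: _).
rewrite exprDn (@big_ord_widen _ 0 +%R l.+1 k.+1 (fun i : nat => lam0 ^+ (l - i) * z ^+ i *+ 'C(l, i)) (ltn_ord l)) big_mkcond /=.
apply: eq_bigr => i _; case: ifP => hi.
  by rewrite -mulr_natr; ring.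
rewrite bin_small ?mulr0n ?mul0r ?mulr0 //.
by rewrite ltnNge -ltnS hi.
Qed.
Theorem lemma3p10
  (R : realType) (V W : completeNormedModType R[i])
  (k : nat) (A : nat -> {linear V -> W})
  (hA : forall j, continuous (A j))
  (lam0 : R[i]) (Rf : R[i] -> W -> V) (d : nat) (Rl : int -> W -> V)
  (hR : exists2 r : R[i], 0 < r &
     forall lam : R[i], 0 < `|lam - lam0| < r ->
       [/\ forall w : W, Pop k (fun j => A j) lam (Rf lam w) = w,
           forall v : V, Rf lam (Pop k (fun j => A j) lam v) = v &
           forall w : W,
             (\sum_(n < M) ((lam - lam0) ^ (n%:Z - d%:Z)) *: Rl (n%:Z - d%:Z) w)
               @[M --> \oo] --> Rf lam w])
  (N : nat) (c : nat -> W) (hc : forall j, (N <= j)%N -> c j = 0) :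
  Plam0 k (fun j => A j) lam0 (Qlam0 d Rl N c) = c.
Proof.
have [r r0 Hr] := hR.
have Hz : forall z : R[i], 0 < `|z| < r -> 0 < `|(lam0 + z) - lam0| < r.
  by move=> z; rewrite [lam0 + z]addrC addrK.
have HS : forall (w : W) (z : R[i]), 0 < `|z| < r ->
    (\sum_(n < M) z ^+ n *: Rl (n%:Z - d%:Z) w) @[M --> \oo] -->
       z ^+ d *: Rf (lam0 + z) w.
  move=> w z hz.
  have hz0 : z != 0 by rewrite -normr_gt0; case/andP: hz.
  have [_ _ H3] := Hr _ (Hz z hz).
  have := cvgZl_tmp (k := z ^+ d) (H3 w) => /(_ eventually_filter).
  rewrite [lam0 + z]addrC addrK.
  suff -> : (fun M => \sum_(n < M) z ^+ n *: Rl (n%:Z - d%:Z) w) =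
     (z ^+ d \*: (fun M => \sum_(n < M) (z ^ (n%:Z - d%:Z)) *: Rl (n%:Z - d%:Z) w)) by [].
  apply: funext => M.
  change (\sum_(n < M) z ^+ n *: Rl (n%:Z - d%:Z) w =
     z ^+ d *: \sum_(n < M) (z ^ (n%:Z - d%:Z)) *: Rl (n%:Z - d%:Z) w).
  rewrite scaler_sumr; apply: eq_bigr => n _; rewrite scalerA; congr (_ *: _).
  by rewrite -[z ^+ d]/(z ^ d%:Z) -expfzDr // addrC subrK.
have Hzero : forall n : nat, Rl (n%:Z - d%:Z) 0 = 0.
  apply: (@coef_all R V r (fun n : nat => Rl (n%:Z - d%:Z) 0) r0) => z hz.
  have [_ H2 _] := Hr _ (Hz z hz).
  have := HS 0 z hz.
  by have := H2 0; rewrite Pop0 => ->; rewrite scaler0.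
apply: combin => // w s.
set b := fun s : nat => \sum_(n' < k.+1 | (n' <= s)%N)
        Ptaylor k (fun j => A j) lam0 n' (Rl ((s - n')%N%:Z - d%:Z) w).
suff : b s - (if s == d then w else 0) = 0 by move/eqP; rewrite subr_eq0 => /eqP.
apply: (@coef_all R W r (fun s => b s - (if s == d then w else 0)) r0) => z hz.
have [H1 _ _] := Hr _ (Hz z hz).
set S := fun m : nat => \sum_(n < m) z ^+ n *: Rl (n%:Z - d%:Z) w.
set L := z ^+ d *: Rf (lam0 + z) w.
have HSw : S M @[M --> \oo] --> L by exact: HS.
have E1 : forall M, \sum_(s < M) z ^+ s *: b s =
    \sum_(n' < k.+1) z ^+ n' *: Ptaylor k (fun j => A j) lam0 n' (S (M - n')%N).
  move=> M; rewrite /b.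
  under eq_bigr do rewrite scaler_sumr big_mkcond.
  rewrite exchange_big /=; apply: eq_bigr => n' _.
  rewrite -big_mkcond /= (reindex_ge _ _ _ (fun s => z ^+ s *: Ptaylor k (fun j => A j) lam0 n'
        (Rl ((s - n')%N%:Z - d%:Z) w))).
  rewrite /S Pt_sum scaler_sumr; apply: eq_bigr => n _.
  by rewrite PtZ scalerA exprD addKn.
have HG : (\sum_(s < M) z ^+ s *: b s) @[M --> \oo] --> z ^+ d *: w.
  have -> : (fun M => \sum_(s < M) z ^+ s *: b s) = (fun M =>
    \sum_(n' < k.+1) z ^+ n' *: Ptaylor k (fun j => A j) lam0 n' (S (M - n')%N)).
    by apply: funext => M; rewrite E1.
  have -> : z ^+ d *: w = \sum_(n' < k.+1) z ^+ n' *: Ptaylor k (fun j => A j) lam0 n' L.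
    rewrite -{1}(H1 w) Pop_taylor scaler_sumr; apply: eq_bigr => n' _.
    by rewrite /L PtZ !scalerA mulrC.
  apply: (@cvg_bigsum R W k.+1 (fun n' M => z ^+ n' *: Ptaylor k (fun j => A j) lam0 n' (S (M - n')%N))
     (fun n' => z ^+ n' *: Ptaylor k (fun j => A j) lam0 n' L)) => n' _.
  have := cvgZl_tmp (k := z ^+ n') (f := fun M => Ptaylor k (fun j => A j) lam0 n' (S (M - n')%N))
     (a := Ptaylor k (fun j => A j) lam0 n' L).
  move=> /(_ _ eventually_filter) h; apply: h.
  rewrite /Ptaylor.
  apply: (@cvg_bigsum R W k.+1 (fun l M => ('C(l, n')%:R * lam0 ^+ (l - n')) *: A (k - l)%N (S (M - n')%N))
     (fun l => ('C(l, n')%:R * lam0 ^+ (l - n')) *: A (k - l)%N L)) => l _.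
  have := cvgZl_tmp (k := ('C(l, n')%:R * lam0 ^+ (l - n'))) (f := fun M => A (k - l)%N (S (M - n')%N))
     (a := A (k - l)%N L).
  move=> /(_ _ eventually_filter) h; apply: h.
  have HS' : S (M - n')%N @[M --> \oo] --> L.
    rewrite -(cvg_shiftn n').
    have -> : [sequence S (n + n' - n')%N]_n = S by apply: funext => n /=; rewrite addnK.
    exact: HSw.
  exact: (cvg_comp _ _ HS' (hA _ L)).
have HE : (\sum_(s < M) z ^+ s *: (if s == d :> nat then w else 0)) @[M --> \oo] --> z ^+ d *: w.
  rewrite -(cvg_shiftn d.+1).
  have -> : [sequence \sum_(s < (n + d.+1)%N) z ^+ s *: (if s == d :> nat then w else 0)]_n
     = (fun=> z ^+ d *: w).
    apply: funext => n /=.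
    rewrite -(big_eq_pick _ _ _ (fun s => z ^+ s *: w) (_ : d < n + d.+1)%N); last by lia.
    by apply: eq_bigr => i _; case: eqP => _; rewrite ?scaler0.
  exact: cvg_cst.
have := cvgB HG HE; rewrite subrr => /(_ eventually_filter).
suff -> : (fun M => \sum_(s < M) z ^+ s *: (b s - (if s == d :> nat then w else 0))) =
   ((fun M => \sum_(s < M) z ^+ s *: b s) - (fun M => \sum_(s < M) z ^+ s *: (if s == d :> nat then w else 0))) by [].
apply: funext => M.
change (\sum_(s < M) z ^+ s *: (b s - (if s == d :> nat then w else 0)) =
   \sum_(s < M) z ^+ s *: b s - \sum_(s < M) z ^+ s *: (if s == d :> nat then w else 0)).
by rewrite -sumrB; apply: eq_bigr => i _; rewrite scalerBr.
Qed.
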